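(* The sequential specification $\mathsf{Queue}$, defined by the ordered rules $R_0, R_{Enq}, R_{EnqDeq}, R_{DeqEmpty}$, is step-by-step linearizable. That is, for every differentiated history $h$ and every data value $x$: (1) if $h \sqsubseteq u$ for some $u\in M_x(R_0)$, and $h\setminus x\sqsubseteq [\![R_0]\!]$, then $h\sqsubseteq [\![R_0]\!]$; (2) if $h \sqsubseteq u$ for some $u \in M_x(R_{Enq})$, and $h\setminus x \sqsubseteq [\![R_0,R_{Enq}]\!]$, then $h \sqsubseteq [\![R_0,R_{Enq}]\!]$; (3) if $h \sqsubseteq u$ for some $u \in M_x(R_{EnqDeq})$, and $h\setminus x \sqsubseteq [\![R_0,R_{Enq},R_{EnqDeq}]\!]$, then $h \sqsubseteq [\![R_0,R_{Enq},R_{EnqDeq}]\!]$; (4) if $h \sqsubseteq u$ for some $u \in M_x(R_{DeqEmpty})$, and $h\setminus x \sqsubseteq \mathsf{Queue}$, then $h \sqsubseteq \mathsf{Queue}$.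
   Context: Data values are natural numbers. An operation (resp. method event) is a pair of a method name in $\{Enq, Deq, DeqEmpty\}$ and a data value; write e.g. $Enq(x)$. For $DeqEmpty$ the data value is a ghost identifier. A history $h$ is a finite set of operations together with a strict partial order $<_{hb}$ (happens-before) which is an interval order (if $o_1<_{hb}o_2$ and $o_3<_{hb}o_4$ then $o_1<_{hb}o_4$ or $o_3<_{hb}o_2$). A sequential execution is a finite sequence of method events. A history (or sequential execution) is differentiated if each data value is carried by at most one $Enq$ or $DeqEmpty$ operation, and the value of a $DeqEmpty$ operation is carried by no other operation. $h\sqsubseteq u$ ($h$ is linearizable w.r.t. $u$) means there is a bijection between the operations of $h$ and the positions of $u$ preserving method and data value such that whenever $o_1<_{hb}o_2$, the image of $o_1$ precedes the image of $o_2$ in $u$; for a set $S$ of sequential executions, $h\sqsubseteq S$ means $h\sqsubseteq u$ for some $u\in S$. $h\setminus x$ is the history obtained by removing all operations with data value $x$ (with induced order). An $Enq(d)$ event in a sequence $u$ is unmatched if $u$ contains no $Deq(d)$; $\mathrm{matched}(u)$ means $u$ has no unmatched $Enq$; $\mathrm{only}(u,Enq)$ means all events of $u$ are $Enq$ events. The rules: $R_0$: $\epsilon\in\mathsf{Queue}$. $R_{Enq}$: $u\in\mathsf{Queue}\wedge \mathrm{only}(u,Enq)\Rightarrow Enq(x)\cdot u\in\mathsf{Queue}$. $R_{EnqDeq}$: $u\cdot v\in\mathsf{Queue}\wedge\mathrm{only}(u,Enq)\Rightarrow Enq(x)\cdot u\cdot Deq(x)\cdot v\in\mathsf{Queue}$.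 $R_{DeqEmpty}$: $u\cdot v\in\mathsf{Queue}\wedge \mathrm{matched}(u)\Rightarrow u\cdot DeqEmpty(x)\cdot v\in\mathsf{Queue}$ (in each rule, $x$ does not occur in $u,v$). For a list of rules $R_1,\dots,R_k$, $[\![R_1,\dots,R_k]\!]$ is the smallest set of sequential executions closed under these rules; $\mathsf{Queue}=[\![R_0,R_{Enq},R_{EnqDeq},R_{DeqEmpty}]\!]$. The matching sets with witness $x$ (no recursive membership condition): $M_x(R_0)=\{\epsilon\}$; $M_x(R_{Enq})$ = sequences $Enq(x)\cdot u$ with $\mathrm{only}(u,Enq)$; $M_x(R_{EnqDeq})$ = sequences $Enq(x)\cdot u\cdot Deq(x)\cdot v$ with $\mathrm{only}(u,Enq)$; $M_x(R_{DeqEmpty})$ = sequences $u\cdot DeqEmpty(x)\cdot v$ with $\mathrm{matched}(u)$; in all cases $x$ does not occur in $u$ or $v$. *)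

(* Defs.v *)
From HB Require Import structures.
From mathcomp Require Import all_boot.

Set Implicit Arguments.
Unset Strict Implicit.
Unset Printing Implicit Defensive.

Inductive meth := Enq | Deq | DeqEmpty.

Lemma meth_eq_dec : comparable meth.
Proof. by move=> a b; rewrite /decidable; decide equality. Defined.

HB.instance Definition _ := comparableMixin meth_eq_dec.

Definition op := (meth * nat)%type.
Definition mk (m : meth) (d : nat) : op := (m, d).

Definition sexec := seq op.

(* Histories: a finite set of operations (a duplicate-free list) together
   with a happens-before relation. *)
Record history := History { ops : seq op; hb : op -> op -> Prop }.

(* Well-formedness: hb is a strict partial order on the operations of h
   which is an interval order. *)
Definition is_history (h : history) : Prop :=
  [/\ uniq (ops h),
      (forall a b, hb h a b -> a \in ops h /\ b \in ops h),
      (forall a, ~ hb h a a),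
      (forall a b c, hb h a b -> hb h b c -> hb h a c)
    & (forall o1 o2 o3 o4, hb h o1 o2 -> hb h o3 o4 -> hb h o1 o4 \/ hb h o3 o2)].

Definition is_EnqOrDeqEmpty (o : op) : bool := (o.1 == Enq) || (o.1 == DeqEmpty).

Definition differentiated (h : history) : Prop :=
  (forall x : nat, count (fun o => is_EnqOrDeqEmpty o && (o.2 == x)) (ops h) <= 1) /\
  (forall o, o \in ops h -> o.1 = DeqEmpty ->
     forall o', o' \in ops h -> o'.2 = o.2 -> o' = o).

(* h ⊑ u : a bijection between the operations of h and the positions of u,
   preserving method and data value, and respecting happens-before. *)
Definition lin (h : history) (u : sexec) : Prop :=
  exists f : op -> nat,
    [/\ (forall o, o \in ops h -> f o < size u /\ nth (mk Enq 0) u (f o) = o),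
        {in ops h &, injective f},
        (forall i, i < size u -> exists2 o, o \in ops h & f o = i)
      & (forall a b, hb h a b -> f a < f b)].

Definition lin_set (h : history) (S : sexec -> Prop) : Prop :=
  exists2 u, S u & lin h u.

Definition hist_remove (h : history) (x : nat) : history :=
  History [seq o <- ops h | o.2 != x]
          (fun a b => hb h a b /\ a.2 <> x /\ b.2 <> x).

Definition occurs (x : nat) (u : sexec) : bool := has (fun o => o.2 == x) u.
Definition only_enq (u : sexec) : bool := all (fun o => o.1 == Enq) u.
Definition matched (u : sexec) : Prop :=
  forall d, mk Enq d \in u -> mk Deq d \in u.

(* [[R_0, ...]] : the smallest set of sequential executions closed under
   R_0 and the enabled rules among R_Enq, R_EnqDeq, R_DeqEmpty (in that order). *)
Inductive gen (rEnq rEnqDeq rDeqEmpty : bool) : sexec -> Prop :=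
| gen_R0 : gen rEnq rEnqDeq rDeqEmpty [::]
| gen_REnq : forall x u, rEnq -> gen rEnq rEnqDeq rDeqEmpty u -> only_enq u ->
    ~~ occurs x u -> gen rEnq rEnqDeq rDeqEmpty (mk Enq x :: u)
| gen_REnqDeq : forall x u v, rEnqDeq -> gen rEnq rEnqDeq rDeqEmpty (u ++ v) ->
    only_enq u -> ~~ occurs x u -> ~~ occurs x v ->
    gen rEnq rEnqDeq rDeqEmpty (mk Enq x :: u ++ mk Deq x :: v)
| gen_RDeqEmpty : forall x u v, rDeqEmpty -> gen rEnq rEnqDeq rDeqEmpty (u ++ v) ->
    matched u -> ~~ occurs x u -> ~~ occurs x v ->
    gen rEnq rEnqDeq rDeqEmpty (u ++ mk DeqEmpty x :: v).

Definition L_R0 := gen false false false.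
Definition L_R0_Enq := gen true false false.
Definition L_R0_Enq_EnqDeq := gen true true false.
Definition Queue := gen true true true.

(* Matching sets M_x(R) (no recursive membership condition). *)
Definition M_R0 (x : nat) (w : sexec) : Prop := w = [::].
Definition M_REnq (x : nat) (w : sexec) : Prop :=
  exists u, [/\ w = mk Enq x :: u, only_enq u & ~~ occurs x u].
Definition M_REnqDeq (x : nat) (w : sexec) : Prop :=
  exists u v, [/\ w = mk Enq x :: u ++ mk Deq x :: v, only_enq u,
                  ~~ occurs x u & ~~ occurs x v].
Definition M_RDeqEmpty (x : nat) (w : sexec) : Prop :=
  exists u v, [/\ w = u ++ mk DeqEmpty x :: v, matched u,
                  ~~ occurs x u & ~~ occurs x v].

(* Main.v *)
Require Import Defs.
From mathcomp Require Import all_boot.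
From Stdlib Require Import ClassicalEpsilon.

Set Implicit Arguments.
Unset Strict Implicit.
Unset Printing Implicit Defensive.

Definition before (s : sexec) (a b : op) : Prop :=
  [/\ a \in s, b \in s & index a s < index b s].

Lemma before_cons (c : op) s a b : uniq (c :: s) ->
  before (c :: s) a b <-> (a = c /\ b \in s) \/ before s a b.
Proof.
move=> /= /andP [cs us]; rewrite /before /= !in_cons.
case: (eqVneq a c) => [->|ac] /=.
- split.
  + case=> _ bin; case: (eqVneq b c) => [->|bc]; first by [].
    by move: bin; rewrite (negbTE bc) /= => ->; left.
  + case=> [[_ bs]|[]]; last by rewrite (negbTE cs).
    have bc : c != b by apply/eqP=> E; move: cs; rewrite E bs.
    by rewrite bs orbT (negbTE bc).
- split.
  + case=> ain bin; case: (eqVneq b c) => [->|bc]; first by rewrite ?eqxx.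
    rewrite ?(eq_sym c b) ?(negbTE bc) /= ltnS => lt; right; move: bin; rewrite (negbTE bc) /= => bin.
    by split.
  + case=> [[E _]|[ain bin lt]]; first by rewrite E eqxx in ac.
    have bc : c != b by apply/eqP=> E; move: cs; rewrite E bin.
    by rewrite ain bin orbT (negbTE bc).
Qed.

Lemma before_mem s a b : before s a b -> a \in s /\ b \in s.
Proof. by case. Qed.

Lemma before_irr s a : ~ before s a a.
Proof. by case=> _ _; rewrite ltnn. Qed.

Lemma before_cat s1 s2 a b : uniq (s1 ++ s2) ->
  before (s1 ++ s2) a b <-> before s1 a b \/ (a \in s1 /\ b \in s2) \/ before s2 a b.
Proof.
elim: s1 => [|c s1 IH] /= U.
  split; [by right; right|]. by case=> [[]|[[]|]].
have U' : uniq (s1 ++ s2) by case/andP: U.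
rewrite (@before_cons _ _ _ _ U) (IH U').
have : uniq ((c :: s1) ++ s2) by []. rewrite cat_uniq => /andP[Uc _].
rewrite (@before_cons _ _ _ _ Uc) mem_cat in_cons.
split.
- case=> [[-> H]|[H|[[H1 H2]|H]]].
  + case/orP: H => H; [left; left; done| right; left; by rewrite eqxx].
  + by left; right.
  + by right; left; rewrite H1 orbT.
  + by right; right.
- case=> [[[-> H]|H]|[[H1 H2]|H]].
  + by left; rewrite H.
  + by right; left.
  + case/orP: H1 => [/eqP->|H1]; first by left; rewrite H2 orbT.
    by right; right; left.
  + by right; right; right.
Qed.

Lemma before_filter (p : pred op) s a b : uniq s ->
  before (filter p s) a b <-> before s a b /\ p a /\ p b.
Proof.
elim: s => [|c s IH] U /=.
  by split; [case; rewrite in_nil | case=> [[]]]; rewrite in_nil.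
have U' : uniq s by case/andP: U.
rewrite (@before_cons _ _ _ _ U).
case pc: (p c).
- have Uf : uniq (c :: filter p s) by rewrite /= mem_filter pc /=; case/andP: U => ->; rewrite filter_uniq.
  rewrite (@before_cons _ _ _ _ Uf) (IH U') mem_filter.
  split.
  + case=> [[-> /andP[pb bs]]|[H [pa pb]]]; [by split; [left|] | by split; [right|]].
  + case=> [[[-> bs]|H] [pa pb]]; [left; by rewrite pb bs | by right].
- rewrite (IH U'); split.
  + by case=> H [pa pb]; split; [right|].
  + case=> [[[E _]|H] [pa pb]]; [by rewrite E pc in pa| by []].
Qed.

Definition L (h : history) (u : sexec) : Prop :=
  [/\ uniq u, forall o, (o \in ops h) = (o \in u) & forall a b, hb h a b -> before u a b].

Lemma lin_L h u : (forall a b, hb h a b -> a \in ops h /\ b \in ops h) ->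
  lin h u -> L h u.
Proof.
move=> Hd [f [Hf Hinj Hsurj Hhb]].
have Hu : uniq u.
  apply/(uniqP (mk Enq 0)) => i j; rewrite !inE => iu ju E.
  case: (Hsurj i iu) => oi oih foi; case: (Hsurj j ju) => oj ojh foj.
  have := Hf _ oih; have := Hf _ ojh; rewrite foi foj => -[_ Ej] [_ Ei].
  by rewrite -foi -foj; congr f; rewrite -Ei -Ej E.
have Hmem : forall o, (o \in ops h) = (o \in u).
  move=> o; apply/idP/idP => H.
    by case: (Hf _ H) => lt <-; rewrite mem_nth.
  have lt : index o u < size u by rewrite index_mem.
  case: (Hsurj _ lt) => o' o'h fo'; case: (Hf _ o'h) => _; rewrite fo' nth_index // => E.
  by rewrite E.
have Hidx : forall o, o \in ops h -> index o u = f o.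
  by move=> o oh; case: (Hf _ oh) => lt E; rewrite -{1}E index_uniq.
split=> // a b hab; case: (Hd _ _ hab) => ah bh.
by split; rewrite -?Hmem // (Hidx _ ah) (Hidx _ bh); apply: Hhb.
Qed.

Lemma L_lin h u : L h u -> lin h u.
Proof.
case=> Hu Hmem Hhb; exists (fun o => index o u); split.
- by move=> o oh; rewrite index_mem -Hmem oh nth_index // -Hmem.
- move=> a b ah bh E; rewrite -(nth_index (mk Enq 0) (_ : a \in u)) -?Hmem //.
  by rewrite E nth_index // -Hmem.
- move=> i iu; exists (nth (mk Enq 0) u i); last by rewrite index_uniq.
  by rewrite Hmem mem_nth.
- by move=> a b /Hhb [].
Qed.

Definition validQ (w : sexec) : Prop :=
 [/\ uniq w,
   (forall d o, mk DeqEmpty d \in w -> o \in w -> o.2 = d -> o = mk DeqEmpty d),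
   (forall d, mk Deq d \in w -> before w (mk Enq d) (mk Deq d)),
   (forall a b, before w (mk Enq a) (mk Enq b) -> mk Deq b \in w ->
        before w (mk Deq a) (mk Deq b))
 & (forall a d, before w (mk Enq a) (mk DeqEmpty d) ->
        before w (mk Deq a) (mk DeqEmpty d))].

Lemma validQ_filter (q : pred nat) w : validQ w -> validQ (filter (fun o => q o.2) w).
Proof.
case=> U H1 H2 H3 H4.
have BF := fun a b => @before_filter (fun o => q o.2) w a b U.
split.
- exact: filter_uniq.
- move=> d o; rewrite !mem_filter => /andP[_ dw] /andP[_ ow] E; exact: H1 dw ow E.
- move=> d; rewrite mem_filter /= => /andP[qd dw]; apply/BF; split=> //; exact: H2.
- move=> a b /BF [Hab [qa qb]]; rewrite mem_filter => /andP[_ dw].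
  by apply/BF; split=> //; apply: H3.
- by move=> a d /BF [Hab [qa qb]]; apply/BF; split=> //; apply: H4.
Qed.

Lemma before_asym s a b : before s a b -> before s b a -> False.
Proof. by case=> _ _ l1 [_ _ l2]; move: (ltn_trans l1 l2); rewrite ltnn. Qed.

Lemma before_head c s b : uniq (c :: s) -> b \in s -> before (c :: s) c b.
Proof. by move=> U bs; apply/(@before_cons _ _ _ _ U); left. Qed.

Lemma before_to_head c s a : uniq (c :: s) -> ~ before (c :: s) a c.
Proof.
move=> U /(@before_cons _ _ _ _ U) [[E cs]|[_ cs _]]; move: U => /= /andP[H _];
  by rewrite cs in H.
Qed.

Lemma filter_notx x u : ~~ occurs x u -> filter (fun o => o.2 != x) u = u.
Proof. by move=> H; apply/all_filterP; rewrite all_predC. Qed.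

Lemma notocc x (u : sexec) (o : op) : ~~ occurs x u -> o \in u -> o.2 <> x.
Proof. by move=> /hasPn H /H /= /eqP. Qed.

Lemma occ_notin x (u : sexec) : (forall o', o' \in u -> o'.2 <> x) -> ~~ occurs x u.
Proof. by move=> H; apply/hasPn => o' /H /eqP. Qed.

Lemma onlyE (u : sexec) (o : op) : only_enq u -> o \in u -> o.1 = Enq.
Proof. by move=> /allP H /H /eqP. Qed.

Lemma uniq_ins (u v : sexec) (y : op) : uniq (u ++ v) -> y \notin u -> y \notin v -> uniq (u ++ y :: v).
Proof.
move=> U yu yv; rewrite uniq_catC /= mem_cat negb_or yu yv /=.
by rewrite uniq_catC.
Qed.

Lemma mk_inj m1 m2 d1 d2 : mk m1 d1 = mk m2 d2 -> m1 = m2 /\ d1 = d2.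
Proof. by case. Qed.

Lemma gen_valid b1 b2 b3 w : gen b1 b2 b3 w -> validQ w.
Proof.
elim=> {w}.
- by split.
- move=> x u _ _ [U _ _ _ _] Hu Hx.
  have exu : mk Enq x \notin u by apply/negP=> H; apply: (notocc Hx H).
  have nE : forall o, o \in mk Enq x :: u -> o.1 = Enq.
    by move=> o; rewrite in_cons => /orP[/eqP->//|/(onlyE Hu)].
  split.
  + by rewrite /= exu.
  + by move=> d o /nE.
  + by move=> d /nE.
  + by move=> a b _ /nE.
  + by move=> a d [_ /nE].
- move=> x u v _ _ [U1 H1 H2 H3 H4] Hu Hxu Hxv.
  set ex := mk Enq x; set dx := mk Deq x; set w := ex :: u ++ dx :: v.
  have nx : forall o, o \in u ++ v -> o.2 <> x.
    by move=> o; rewrite mem_cat => /orP[/(notocc Hxu)|/(notocc Hxv)].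
  have dxu : dx \notin u by apply/negP=> /(notocc Hxu).
  have dxv : dx \notin v by apply/negP=> /(notocc Hxv).
  have U2 : uniq (u ++ dx :: v) by apply: uniq_ins.
  have Uw : uniq w.
    rewrite /w /= U2 andbT mem_cat in_cons negb_or; apply/andP; split.
      by apply/negP=> /(notocc Hxu).
    by apply/negP=> /orP[//|/(notocc Hxv)].
  have Udv : uniq (dx :: v) by move: U2; rewrite cat_uniq => /and3P[].
  have Ef : filter (fun o => o.2 != x) w = u ++ v.
    by rewrite /w /= eqxx /= filter_cat /= eqxx /= !filter_notx.
  have Bf : forall a b, a.2 <> x -> b.2 <> x -> (before w a b <-> before (u ++ v) a b).
    move=> a b ax bx; rewrite -Ef (@before_filter _ _ _ _ Uw); split; first by move=> H; split=> //; split; apply/eqP.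
    by case.
  have Mf : forall o, o.2 <> x -> (o \in w) = (o \in u ++ v).
    by move=> o ox; rewrite -Ef mem_filter; case: eqP.
  have Vx : forall o, o \in w -> o.2 = x -> o = ex \/ o = dx.
    move=> o; rewrite /w in_cons mem_cat in_cons => /orP[/eqP->|/orP[H|/orP[/eqP->|H]]] E;
      [by left|by case: (nx o); rewrite ?mem_cat ?H|by right|by case: (nx o); rewrite ?mem_cat ?H ?orbT].
  have Bdx : forall o, o \in v -> before w dx o.
    move=> o ov; apply/(@before_cons _ _ _ _ Uw); right.
    apply/(@before_cat _ _ _ _ U2); right; right; exact: before_head.
  have inv : forall o, o \in w -> o.2 <> x -> o.1 <> Enq -> o \in v.
    move=> o ow ox oE; move: ow; rewrite Mf // mem_cat => /orP[/(onlyE Hu)//|//].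
  split=> //.
  + move=> d o Dw ow od; case: (eqVneq d x) => [dx'|dx'].
      by case: (Vx _ Dw dx').
    move: Dw ow; rewrite !Mf ?od; [|by apply/eqP|by apply/eqP]; move=> Dw ow; exact: H1 Dw ow od.
  + move=> d Dw; case: (eqVneq d x) => [->|dx'].
      by apply: before_head => //; rewrite mem_cat in_cons eqxx orbT.

    apply/Bf; [by apply/eqP|by apply/eqP|]; apply: H2; rewrite -Mf //; exact/eqP.
  + move=> a b Hab Db; case: (eqVneq a x) => [ax|ax].
      subst a; case: (eqVneq b x) => [bx|bx]; first by subst b; case: (before_irr Hab).
      by apply: Bdx; apply: inv => //; apply/eqP.
    case: (eqVneq b x) => [bx|bx]; first by subst b; case: (before_to_head Uw Hab).
    apply/Bf; [exact/eqP|exact/eqP|]; apply: H3; first by apply/Bf => //; exact/eqP.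
    by rewrite -Mf //; exact/eqP.
  + move=> a d Had; have Dw : mk DeqEmpty d \in w by case: Had.
    have dx' : d <> x by move=> E; case: (Vx _ Dw E).
    case: (eqVneq a x) => [ax|ax].
      by subst a; apply: Bdx; apply: inv.
    apply/Bf => //; [exact/eqP|]; apply: H4; apply/Bf => //; exact/eqP.
- move=> x u v _ _ [U1 H1 H2 H3 H4] Hm Hxu Hxv.
  set e := mk DeqEmpty x; set w := u ++ e :: v.
  have nx : forall o, o \in u ++ v -> o.2 <> x.
    by move=> o; rewrite mem_cat => /orP[/(notocc Hxu)|/(notocc Hxv)].
  have eu : e \notin u by apply/negP=> /(notocc Hxu).
  have ev : e \notin v by apply/negP=> /(notocc Hxv).
  have Uw : uniq w by apply: uniq_ins.
  have Uev : uniq (e :: v) by move: Uw; rewrite cat_uniq => /and3P[].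
  have Ef : filter (fun o => o.2 != x) w = u ++ v.
    by rewrite /w filter_cat /= eqxx /= !filter_notx.
  have Bf : forall a b, a.2 <> x -> b.2 <> x -> (before w a b <-> before (u ++ v) a b).
    move=> a b ax bx; rewrite -Ef (@before_filter _ _ _ _ Uw); split; first by move=> H; split=> //; split; apply/eqP.
    by case.
  have Mf : forall o, o.2 <> x -> (o \in w) = (o \in u ++ v).
    by move=> o ox; rewrite -Ef mem_filter; case: eqP.
  have Vx : forall o, o \in w -> o.2 = x -> o = e.
    move=> o; rewrite /w mem_cat in_cons => /orP[H|/orP[/eqP->//|H]] E;
      by case: (nx o); rewrite ?mem_cat ?H ?orbT.
  split=> //.
  + move=> d o Dw ow od; case: (eqVneq d x) => [dx'|dx'].
      by rewrite dx'; apply: Vx => //; rewrite od.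

    move: Dw ow; rewrite !Mf ?od; [|by apply/eqP|by apply/eqP]; move=> Dw ow; exact: H1 Dw ow od.
  + move=> d Dw; have dx' : d <> x by move=> E; move: (Vx _ Dw E).
    apply/Bf => //; apply: H2; rewrite -Mf //.
  + move=> a b Hab Db.
    have ax : a <> x by move=> E; case: Hab => /Vx /(_ E).
    have bx : b <> x by move=> E; case: Hab => _ /Vx /(_ E).
    apply/Bf => //; apply: H3; [by apply/Bf|by rewrite -Mf].
  + move=> a d Had.
    have ax : a <> x by move=> E; case: Had => /Vx /(_ E).
    case: (eqVneq d x) => [dx'|dx'].
      subst d; move/(@before_cat _ _ _ _ Uw): Had => [[_ eu' _]|[[Au _]|/(before_to_head Uev)//]].
        by rewrite eu' in eu.
      apply/(@before_cat _ _ _ _ Uw); right; left; split; first exact: Hm.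
      by rewrite in_cons eqxx.
    apply/Bf => //; [exact/eqP|]; apply: H4; apply/Bf => //; exact/eqP.
Qed.

Definition noDE (w : sexec) := all (fun o => o.1 != DeqEmpty) w.
Definition noDeq (w : sexec) := all (fun o => o.1 != Deq) w.

Lemma gen_noDE b1 b2 w : gen b1 b2 false w -> noDE w.
Proof.
move=> G; induction G => //.
all: move: IHG; rewrite /noDE /= ?all_cat /=; first [by move=> -> | by case/andP=> -> ->].
Qed.

Lemma gen_noDeq b1 b3 w : gen b1 false b3 w -> noDeq w.
Proof.
move=> G; induction G => //.
all: move: IHG; rewrite /noDeq /= ?all_cat /=; first [by move=> -> | by case/andP=> -> ->].
Qed.



Lemma valid_gen b2 b3 w : validQ w -> (b3 || noDE w) -> (b2 || noDeq w) -> gen true b2 b3 w.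
Proof.
move: {2}(size w) (leqnn (size w)) => n; elim: n w => [|n IH] w.
  by case: w => // _ _ _ _; apply: gen_R0.
move=> Sw Vw Hb3 Hb2; case: (Vw) => U H1 H2 H3 H4.
case: (boolP (has (fun o => o.1 == DeqEmpty) w)) => [/hasP [[m x] ow /eqP /= mD]|nDE].
- subst m.
  have b3T : b3.
    by move: Hb3; case/orP => // /allP /(_ _ ow) /=.
  have [u [v Ew]] : exists u v, w = u ++ mk DeqEmpty x :: v.
    by case/splitPr: ow => u v; exists u, v.
  set e := mk DeqEmpty x.
  have Vx : forall o, o \in w -> o.2 = x -> o = e by move=> o oin ox; apply: H1.
  have Uw' : uniq (u ++ e :: v) by rewrite -Ew.
  have := Uw'; rewrite cat_uniq /= => /and3P [_ /norP [eu _] /andP [ev _]].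

  have Uev : uniq (e :: v) by move: Uw'; rewrite cat_uniq => /and3P[].
  have Hxu : ~~ occurs x u.
    apply: occ_notin => o ou ox; have := Vx o; rewrite Ew mem_cat ou => /(_ erefl ox) E.
    by rewrite -E ou in eu.
  have Hxv : ~~ occurs x v.
    apply: occ_notin => o ov ox; have := Vx o; rewrite Ew mem_cat in_cons ov !orbT => /(_ erefl ox) E.
    by rewrite -E ov in ev.
  have Ef : filter (fun o => o.2 != x) w = u ++ v.
    by rewrite Ew filter_cat /= eqxx /= !filter_notx.
  rewrite Ew; apply: gen_RDeqEmpty => //.
  + apply: IH.
    * by move: Sw; rewrite Ew !size_cat /= addnS ltnS.
    * by rewrite -Ef; exact: (validQ_filter (fun d => d != x) Vw).
    * by rewrite b3T.
    * by move: Hb2; case/orP => [->//|]; rewrite Ew /noDeq !all_cat /= => /andP[-> ->]; rewrite orbT.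

  + move=> d du.
    have B1 : before w (mk Enq d) e.
      by rewrite Ew; apply/(@before_cat _ _ _ _ Uw'); right; left; rewrite in_cons eqxx.
    move: (H4 _ _ B1); rewrite Ew => /(@before_cat _ _ _ _ Uw') [[_ eu' _]|[[Du _]|/(before_to_head Uev)//]].
      by rewrite eu' in eu.
    done.
- case: w Sw Vw Hb3 Hb2 U H1 H2 H3 H4 nDE => [|[m x] w1] Sw Vw Hb3 Hb2 U H1 H2 H3 H4 nDE.
    exact: gen_R0.
  have ndw : forall o, o \in (m, x) :: w1 -> o.1 <> DeqEmpty.
    by move=> o ow oD; move/hasP: nDE; apply; exists o => //; rewrite oD.
  case: m Sw Vw Hb3 Hb2 U H1 H2 H3 H4 nDE ndw => Sw Vw Hb3 Hb2 U H1 H2 H3 H4 nDE ndw; last first.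
    by case: (ndw (DeqEmpty, x)) => //; rewrite in_cons eqxx.
    by have := H2 x; rewrite in_cons eqxx => /(_ isT) /(before_to_head U).
  set ex := mk Enq x.
  have exw1 : ex \notin w1 by case/andP: U.
  case: (boolP (has (fun o => o.1 == Deq) w1)) => [/hasP [[m b] bw /eqP /= mD]|nDeq].
  + subst m.
    have b2T : b2.
      by move: Hb2; case/orP => // /andP [_ /allP /(_ _ bw) /=].

    have dxw : mk Deq x \in w1.
      case: (eqVneq b x) => [<- //|bx].
      have Ebw : mk Enq b \in w1.
        have := H2 b; rewrite in_cons bw orbT => /(_ isT) [] .
        by rewrite in_cons => /orP[/eqP [] E|//]; rewrite E eqxx in bx.
      have := H3 x b (before_head U Ebw); rewrite in_cons bw orbT => /(_ isT) [].
      by rewrite in_cons.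
    have [u [v Ew]] : exists u v, w1 = u ++ mk Deq x :: v.
      by case/splitPr: dxw => u v; exists u, v.
    set dx := mk Deq x.
    have U2 : uniq (u ++ dx :: v) by rewrite -Ew; case/andP: U.
    have dxu : dx \notin u by move: U2; rewrite cat_uniq => /and3P [_ /norP [] ].
    have dxv : dx \notin v by move: U2; rewrite cat_uniq => /and3P [_ _ /andP[]].
    have nx : forall o, o \in w1 -> o.2 = x -> o = dx.
      move=> [m' c] ow /= cx; subst c; case: m' ow.
      * by move=> ow; rewrite ow in exw1.
      * done.
      * by move=> ow; case: (ndw (DeqEmpty, x)); rewrite ?in_cons ?ow ?orbT.
    have Hxu : ~~ occurs x u.
      apply: occ_notin => o ou ox; have := nx o; rewrite Ew mem_cat ou => /(_ erefl ox) E.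
      by rewrite -E ou in dxu.
    have Hxv : ~~ occurs x v.
      apply: occ_notin => o ov ox; have := nx o; rewrite Ew mem_cat in_cons ov !orbT => /(_ erefl ox) E.
      by rewrite -E ov in dxv.
    have Ef : filter (fun o => o.2 != x) ((Enq, x) :: w1) = u ++ v.
      by rewrite Ew /= eqxx /= filter_cat /= eqxx /= !filter_notx.
    rewrite Ew; apply: gen_REnqDeq => //.
    * apply: IH.
      - by move: Sw; rewrite Ew /= !size_cat /= addnS !ltnS => /ltnW.
      - by rewrite -Ef; exact: (validQ_filter (fun d => d != x) Vw).
      - move: Hb3; case/orP => [->//|]. rewrite Ew /noDE /= !all_cat /=. move=> ->. rewrite orbT. by [].

      - by rewrite b2T.
    * apply/allP => [[m' c]] cu /=; case: m' cu => // cu.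
      - have cx : c <> x by move=> E; rewrite E in cu; rewrite cu in dxu.
        have cw : (Deq, c) \in (Enq, x) :: w1 by rewrite Ew in_cons mem_cat cu orbT.
        have [Ecw _ _] := H2 c cw.
        have Ecw1 : mk Enq c \in w1.
          by move: Ecw; rewrite in_cons => /orP[/eqP [] E|//]; rewrite E in cx.
        have B1 := H3 x c (before_head U Ecw1) cw.
        have B2 : before ((Enq, x) :: w1) (mk Deq c) (mk Deq x).
          apply/(@before_cons _ _ _ _ U); right; rewrite Ew.
          by apply/(@before_cat _ _ _ _ U2); right; left; rewrite in_cons eqxx.
        by case: (before_asym B1 B2).
      - by case: (ndw (DeqEmpty, c)); rewrite // Ew in_cons mem_cat cu orbT.
  + have Ef : filter (fun o => o.2 != x) ((Enq, x) :: w1) = w1.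
      rewrite /= eqxx /=; apply/all_filterP/allP => [[m' c]] cw /=; apply/eqP => cx; subst c.
      case: m' cw => cw.
      * by rewrite cw in exw1.
      * by move/hasP: nDeq; apply; exists (Deq, x).
      * by case: (ndw (DeqEmpty, x)); rewrite // in_cons cw orbT.
    apply: gen_REnq => //.
    * apply: IH.
      - by move: Sw => /=; rewrite ltnS.
      - by rewrite -Ef; exact: (validQ_filter (fun d => d != x) Vw).
      - by move: Hb3; case: b3 => //= /andP[].
      - by move: Hb2; case: b2 => //= /andP[].
    * apply/allP => [[m' c]] cw /=; case: m' cw => // cw.
      - by move/hasP: nDeq; case; exists (Deq, c).
      - by case: (ndw (DeqEmpty, c)); rewrite // in_cons cw orbT.
    * apply: occ_notin => [[m' c]] cw /= cx; subst c; case: m' cw => cw.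
      - by rewrite cw in exw1.
      - by move/hasP: nDeq; apply; exists (Deq, x).
      - by case: (ndw (DeqEmpty, x)); rewrite // in_cons cw orbT.
Qed.

Section Seg.
Variables (s : sexec) (p : pred op) (c : op).
Hypotheses (Us : uniq s) (cs : c \notin s).
Definition seg2 := filter p s ++ c :: filter (predC p) s.

Lemma seg2_mem o : (o \in seg2) = (o == c) || (o \in s).
Proof.
rewrite /seg2 mem_cat in_cons !mem_filter /=.
case: (o == c); case: (o \in s); rewrite /= ?andbT ?andbF ?orbT //.
by case: (p o).

Qed.

Lemma seg2_uniq : uniq seg2.
Proof.
apply: uniq_ins.
- rewrite cat_uniq !filter_uniq //= andbT; apply/hasPn => o.
  by rewrite !mem_filter /= => /andP[/negbTE -> _].
- by rewrite mem_filter (negbTE cs) andbF.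
- by rewrite mem_filter (negbTE cs) andbF.
Qed.

Lemma seg2_bef a b : a \in s -> b \in s ->
  (before seg2 a b <-> (p a /\ ~~ p b) \/ (p a = p b /\ before s a b)).
Proof.
move=> as_ bs.
have U := seg2_uniq.
have Uc : uniq (c :: filter (predC p) s) by move: U; rewrite /seg2 cat_uniq => /and3P[].
have ac : a != c by apply/eqP=> E; move: cs; rewrite -E as_.
have bc : b != c by apply/eqP=> E; move: cs; rewrite -E bs.

rewrite /seg2 (@before_cat _ _ _ _ U) (@before_cons _ _ _ _ Uc) !(@before_filter _ _ _ _ Us).
rewrite in_cons !mem_filter /= as_ bs (negbTE bc) /=.
move/eqP: ac => ac.
case: (p a); case: (p b); rewrite /is_true; intuition (try discriminate).
Qed.

Lemma seg2_befc o : o \in s -> (before seg2 o c <-> p o).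
Proof.
move=> os; have U := seg2_uniq.
have Uc : uniq (c :: filter (predC p) s) by move: U; rewrite /seg2 cat_uniq => /and3P[].
rewrite /seg2 (@before_cat _ _ _ _ U) mem_filter os andbT in_cons eqxx; split.
- case=> [[_ H _]|[[]//|/(before_to_head Uc)//]].
  by rewrite mem_filter (negbTE cs) andbF in H.
- by move=> ->; right; left.
Qed.

Lemma seg2_cbef o : o \in s -> (before seg2 c o <-> ~~ p o).
Proof.
move=> os; have U := seg2_uniq.
have Uc : uniq (c :: filter (predC p) s) by move: U; rewrite /seg2 cat_uniq => /and3P[].
rewrite /seg2 (@before_cat _ _ _ _ U) (@before_cons _ _ _ _ Uc) mem_filter (negbTE cs) andbF mem_filter os andbT /=.
split.
- case=> [[H _ _]|[[]//|[[_ ->]//|[H _ _]]]].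
    by rewrite mem_filter (negbTE cs) andbF in H.
  by rewrite mem_filter (negbTE cs) andbF in H.
- by move=> H; right; right; left.
Qed.
End Seg.

Definition pb (P : Prop) : bool := if excluded_middle_informative P then true else false.
Lemma pbP P : reflect P (pb P).
Proof. by rewrite /pb; case: excluded_middle_informative => H; [left|right]. Qed.

Lemma seg_befw (s : sexec) p c d a b : uniq s -> c \notin s -> d \notin s -> c != d ->
  a \in s -> b \in s ->
  (before (d :: seg2 s p c) a b <-> (p a /\ ~~ p b) \/ (p a = p b /\ before s a b)).
Proof.
move=> Us cs ds cd as_ bs.
have U : uniq (d :: seg2 s p c) by rewrite /= seg2_uniq // seg2_mem // negb_or eq_sym cd ds.
rewrite (@before_cons _ _ _ _ U) -(seg2_bef p Us cs as_ bs); split; last by right.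

by case=> // -[E _]; move: ds; rewrite -E as_.

Qed.

Lemma part3 h x u1 v w' :
  is_history h ->
  L h (mk Enq x :: u1 ++ mk Deq x :: v) -> only_enq u1 -> ~~ occurs x u1 -> ~~ occurs x v ->
  L (hist_remove h x) w' -> validQ w' -> noDE w' ->
  exists2 w, gen true true false w & L h w.
Proof.
move=> [Uh Hdom Hirr Htr Hint] [Uu Mu Bu] Hu1 Hx1 Hxv [Uw' Mw' Bw'] Vw' nDE.
set ex := mk Enq x; set dx := mk Deq x.
have U2 : uniq (u1 ++ dx :: v) by case/andP: Uu.
have exh : ex \in ops h by rewrite Mu in_cons eqxx.
have dxh : dx \in ops h by rewrite Mu in_cons mem_cat in_cons eqxx !orbT.
have Vals : forall o, o \in ops h -> o.2 = x -> o = ex \/ o = dx.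
  move=> o; rewrite Mu in_cons mem_cat in_cons => /orP[/eqP->|/orP[H|/orP[/eqP->|H]]] E;
    [by left|by case: (notocc Hx1 H E)|by right|by case: (notocc Hxv H E)].
have memw' : forall o, (o \in w') = (o \in ops h) && (o.2 != x).
  by move=> o; rewrite -Mw' /= mem_filter andbC.
have exw' : ex \notin w' by rewrite memw' eqxx andbF.
have dxw' : dx \notin w' by rewrite memw' eqxx andbF.
have hbw' : forall a b, hb h a b -> a.2 <> x -> b.2 <> x -> before w' a b.
  by move=> a b H ax bx; apply: Bw'.
have F1 : forall a, ~ hb h a ex by move=> a /Bu /(before_to_head Uu).
have F2 : forall a, hb h a dx -> a <> ex -> a.1 = Enq /\ a.2 <> x.
  move=> a /Bu /(@before_cons _ _ _ _ Uu) [[E _]//|].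
  have Udv : uniq (dx :: v) by move: U2; rewrite cat_uniq => /and3P[].
  move/(@before_cat _ _ _ _ U2) => [[_ H _]|[[H _]|/(before_to_head Udv)//]] _.
    by case: (notocc Hx1 H).
  by split; [apply: (onlyE Hu1 H) | apply: (notocc Hx1 H)].
have nDEw' : forall o, o \in w' -> o.1 <> DeqEmpty by move=> o /(allP nDE) /eqP.
set Bx := fun a => pb (hb h a dx) && (a.2 != x).
set inE := fun o => (o.1 == Enq) && has (fun a => Bx a && (index o w' <= index a w')) w'.
have inE_wit : forall o, inE o -> o.1 = Enq /\ exists2 a', a' \in w' & [/\ hb h a' dx, a'.2 <> x & index o w' <= index a' w'].
  move=> o /andP [/eqP oE /hasP [a' aw /andP [/andP [/pbP H1 /eqP H2] H3]]].
  by split=> //; exists a'.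
have E1 : forall a b, a \in w' -> b \in w' -> hb h a b -> inE b -> inE a.
  move=> a b aw bw hab /inE_wit [bE [a' a'w [ha' a'x ib]]].
  have ax : a.2 <> x by move: aw; rewrite memw' => /andP[_ /eqP].
  have bx : b.2 <> x by move: bw; rewrite memw' => /andP[_ /eqP].
  have [_ _ iab] := hbw' _ _ hab ax bx.
  case aE: (a.1 == Enq).
    apply/andP; split=> //; apply/hasP; exists a' => //.
    by rewrite /Bx; apply/andP; split; [apply/andP; split; [apply/pbP|apply/eqP]|apply: ltnW; apply: leq_trans ib].
  case: (Hint _ _ _ _ hab ha') => H.
    have aex : a <> ex by move=> E; rewrite E in aw; rewrite aw in exw'.
    by case: (F2 _ H aex) => E _; rewrite E eqxx in aE.
  have [_ _ i2] := hbw' _ _ H a'x bx.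
  by move: (leq_ltn_trans ib i2); rewrite ltnn.
have E2 : forall o, o \in w' -> hb h dx o -> ~~ inE o.
  move=> o ow ho; apply/negP => /inE_wit [_ [a' a'w [ha' a'x io]]].
  have ox : o.2 <> x by move: ow; rewrite memw' => /andP[_ /eqP].
  have [_ _ i2] := hbw' _ _ (Htr _ _ _ ha' ho) a'x ox.
  by move: (leq_ltn_trans io i2); rewrite ltnn.
have E3 : forall o, o \in w' -> hb h o dx -> inE o.
  move=> o ow ho.
  have oex : o <> ex by move=> E; rewrite E in ow; rewrite ow in exw'.
  case: (F2 _ ho oex) => oE ox; apply/andP; split; first by rewrite oE.
  by apply/hasP; exists o => //; rewrite /Bx leqnn andbT; apply/andP; split; [apply/pbP|apply/eqP].
have E4 : forall a b, mk Enq a \in w' -> mk Enq b \in w' -> inE (mk Enq a) -> ~~ inE (mk Enq b) ->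
    before w' (mk Enq a) (mk Enq b).
  move=> a b aw bw /inE_wit [_ [a' a'w [ha' a'x ia]]] nb; split=> //.
  rewrite ltnNge; apply/negP => ib; move/negP: nb; apply; apply/andP; split=> //.
  apply/hasP; exists a' => //; rewrite /Bx; apply/andP; split; first by apply/andP; split; [apply/pbP|apply/eqP].
  exact: leq_trans ib ia.
set w := ex :: seg2 w' inE dx.
have exdx : ex != dx by [].
have Uw : uniq w by rewrite /w /= seg2_uniq // seg2_mem // negb_or exdx exw'.
have Mw : forall o, (o \in w) = (o == ex) || (o == dx) || (o \in w').
  by move=> o; rewrite /w in_cons seg2_mem // orbA.
have Bw : forall a b, a \in w' -> b \in w' ->
    (before w a b <-> (inE a /\ ~~ inE b) \/ (inE a = inE b /\ before w' a b)).
  by move=> a b aw bw; apply: seg_befw.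
have Bex : forall o, o \in w' -> before w ex o.
  by move=> o ow; apply: before_head => //; rewrite seg2_mem // ow orbT.
have Bdx1 : forall o, o \in w' -> (before w o dx <-> inE o).
  move=> o ow; rewrite (@before_cons _ _ _ _ Uw) seg2_befc //; split; last by right.
  by case=> // -[E _]; move: exw'; rewrite -E ow.

have Bdx2 : forall o, o \in w' -> (before w dx o <-> ~~ inE o).
  move=> o ow; rewrite (@before_cons _ _ _ _ Uw) seg2_cbef //; split; last by right.
  by case=> // -[E _].
have Bexdx : before w ex dx by apply: before_head => //; rewrite seg2_mem // eqxx.
have notx : forall o, o \in w -> o.2 <> x -> o \in w'.
  by move=> o; rewrite Mw => /orP[/orP[/eqP->|/eqP->]|//].
exists w.
- apply: valid_gen => //.
  + split=> //.
    * move=> d o; rewrite (Mw (mk DeqEmpty d)) => /orP[/orP[/eqP E|/eqP E]|/nDEw' //]; by [].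
    * move=> d; case: (eqVneq d x) => [->//|dx'] Dw.
      have Dw' : mk Deq d \in w' by apply: notx => //; apply/eqP.
      have [Ew' _ B] := (match Vw' with And5 _ _ H _ _ => H end) d Dw'.
      apply/Bw => //; case E: (inE (mk Enq d)); [by left|right; split=> //].
    * move=> a b Hab Db; case: (eqVneq a x) => [ax|ax].
        subst a; case: (eqVneq b x) => [bx|bx]; first by subst b; case: (before_irr Hab).
        by apply/Bdx2 => //; apply: notx => //= E; rewrite E eqxx in bx.
      case: (eqVneq b x) => [bx|bx]; first by subst b; case: (before_to_head Uw Hab).
      have [Ea Eb] := before_mem Hab.
      have Eaw : mk Enq a \in w' by apply: notx => // /eqP; rewrite (negbTE ax).
      have Ebw : mk Enq b \in w' by apply: notx => // /eqP; rewrite (negbTE bx).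
      have Dbw : mk Deq b \in w' by apply: notx => // /eqP; rewrite (negbTE bx).
      have B1 : before w' (mk Enq a) (mk Enq b).
        by case/(Bw _ _ Eaw Ebw): Hab => [[H1 H2]|[_ H]]; [apply: E4|].
      have B2 := (match Vw' with And5 _ _ _ H _ => H end) a b B1 Dbw.
      have [Daw _] := before_mem B2.
      by apply/Bw => //; right.
    * move=> a d Had; have [_] := before_mem Had.
      by rewrite Mw => /orP[/orP[/eqP//|/eqP//]|/nDEw'].
  + apply/allP => o; rewrite Mw => /orP[/orP[/eqP->//|/eqP->//]|/nDEw' /eqP //].
- split=> //.
  + move=> o; apply/idP/idP => H.
      case: (eqVneq o.2 x) => ox.
        by case: (Vals o H ox) => ->; rewrite Mw eqxx ?orbT.
      by rewrite Mw memw' H ox !orbT.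
    move: H; rewrite Mw => /orP[/orP[/eqP->|/eqP->]|] //.
    by rewrite memw' => /andP[].
  + move=> a b hab; have [ah bh] := Hdom _ _ hab.
    case: (eqVneq b.2 x) => bx.
      case: (Vals b bh bx) => Eb; first by case: (F1 a); rewrite -Eb.
      rewrite Eb in hab *.
      case: (eqVneq a.2 x) => ax.
        case: (Vals a ah ax) => Ea; first by rewrite Ea.
        by rewrite Ea in hab; case: (Hirr _ hab).
      have aw : a \in w' by rewrite memw' ah ax.
      by apply/Bdx1 => //; apply: E3.
    have bw : b \in w' by rewrite memw' bh bx.
    case: (eqVneq a.2 x) => ax.
      case: (Vals a ah ax) => Ea; first by rewrite Ea; apply: Bex.
      by rewrite Ea in hab *; apply/Bdx2 => //; apply: E2.
    have aw : a \in w' by rewrite memw' ah ax.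
    have Bab : before w' a b by apply: hbw' => //; apply/eqP.
    apply/Bw => //.
    case ib: (inE b).
      by right; rewrite (E1 _ _ aw bw hab ib).
    by case ia: (inE a); [left|right].
Qed.

Inductive InC (h : history) (x : nat) : op -> Prop :=
| C0 o : o \in ops h -> o.2 <> x -> hb h o (mk DeqEmpty x) -> InC h x o
| C1 o o' : o.2 <> x -> hb h o o' -> InC h x o' -> InC h x o
| C2 o o' : o \in ops h -> o.2 = o'.2 -> InC h x o' -> InC h x o.

Lemma part4 h x u0 v0 w' :
  is_history h -> differentiated h ->
  L h (u0 ++ mk DeqEmpty x :: v0) -> matched u0 -> ~~ occurs x u0 -> ~~ occurs x v0 ->
  L (hist_remove h x) w' -> validQ w' ->
  exists2 w, Queue w & L h w.
Proof.
move=> [Uh Hdom Hirr Htr Hint] [_ Hd2] [Uu Mu Bu] Hm Hx0 Hxv [Uw' Mw' Bw'] Vw'.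
set e := mk DeqEmpty x.
have [VU V1 V2 V3 V4] := Vw'.
have eh : e \in ops h by rewrite Mu mem_cat in_cons eqxx orbT.
have Vals : forall o, o \in ops h -> o.2 = x -> o = e.
  move=> o; rewrite Mu mem_cat in_cons => /orP[H|/orP[/eqP->//|H]] E;
    [by case: (notocc Hx0 H E)|by case: (notocc Hxv H E)].
have memw' : forall o, (o \in w') = (o \in ops h) && (o.2 != x).
  by move=> o; rewrite -Mw' /= mem_filter andbC.
have ew' : e \notin w' by rewrite memw' eqxx andbF.
have hbw' : forall a b, hb h a b -> a.2 <> x -> b.2 <> x -> before w' a b.
  by move=> a b H ax bx; apply: Bw'.
have disj : forall o, o \in u0 -> o \in e :: v0 -> False.
  move=> o o1 o2; move: Uu; rewrite cat_uniq => /and3P [_ /hasPn /(_ _ o2) H _].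
  by rewrite o1 in H.
have Uev : uniq (e :: v0) by move: Uu; rewrite cat_uniq => /and3P[].
have eu0 : e \notin u0 by apply/negP => H; apply: (disj e H); rewrite in_cons eqxx.
have G1 : forall a b, hb h a b -> b \in u0 -> a \in u0.
  move=> a b /Bu /(@before_cat _ _ _ _ Uu) [[H _ _]|[[H _]|[_ H _]]] bu //.
  by case: (disj _ bu H).
have G2 : forall a, hb h a e -> a \in u0.
  move=> a /Bu /(@before_cat _ _ _ _ Uu) [[_ H _]|[[H _]|/(before_to_head Uev)[]]] //.

have G3 : forall b, hb h e b -> b \notin u0.
  move=> b /Bu /(@before_cat _ _ _ _ Uu) [[H _ _]|[[H _]|[_ H _]]].
  - by rewrite H in eu0.
  - by rewrite H in eu0.
  - by apply/negP => bu; case: (disj _ bu H).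
have NDE : forall v, hb h (mk Deq v) (mk Enq v) -> False.
  move=> v H; have [Dh Eh] := Hdom _ _ H.
  have vx : v <> x by move=> E; move: (Vals _ Dh E).
  have Dw : mk Deq v \in w' by rewrite memw' Dh; apply/eqP.
  have B1 := V2 v Dw.
  have B2 := hbw' _ _ H vx vx.
  exact: before_asym B1 B2.
have cls : forall o o', o \in ops h -> o' \in ops h -> o.2 = o'.2 ->
    o' = o \/ (o.1 = Enq /\ o' = mk Deq o.2) \/ (o.1 = Deq /\ o' = mk Enq o.2).
  move=> [m v] [m' v'] oh o'h /= E; subst v'.
  case: m oh; case: m' o'h => o'h oh; rewrite /mk; try by left.
  - by right; left.
  - by left; symmetry; apply: (Hd2 _ o'h erefl _ oh).
  - by right; right.
  - by left; symmetry; apply: (Hd2 _ o'h erefl _ oh).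
  - by left; apply: (Hd2 _ oh erefl _ o'h).
  - by left; apply: (Hd2 _ oh erefl _ o'h).
set W := fun q : op => (q \in u0) || ((q.1 == Enq) && (mk Deq q.2 \in u0)).
have Wd : forall v, mk Deq v \in u0 ->
    [/\ ~ hb h e (mk Deq v), W (mk Deq v) & forall q, hb h q (mk Deq v) -> W q].
  move=> v Du; split; first by move/G3; rewrite Du.
    by rewrite /W Du.
  by move=> q /G1 /(_ Du) H; rewrite /W H.
set Good := fun o => [/\ o \in ops h, o.2 <> x &
    forall o'', o'' \in ops h -> o''.2 = o.2 ->
      [/\ ~ hb h e o'', W o'' & forall q, hb h q o'' -> W q]].
have CG : forall o, InC h x o -> Good o.
  move=> o; elim=> {o}.
  - move=> o oh ox oe; split=> // o'' o''h E.
    case: (cls _ _ oh o''h (esym E)) => [->|[[oE ->]|[oE ->]]].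
    + split; first by move=> eo; apply: (Hirr o); apply: Htr oe eo.
        by rewrite /W (G2 _ oe).
      by move=> q qo; rewrite /W (G2 _ (Htr _ _ _ qo oe)).
    + apply: Wd; apply: Hm; move: (G2 _ oe); by case: o oh ox oe oE E => m v /= _ _ _ ->.
    + have Du : mk Deq o.2 \in u0 by move: (G2 _ oe); case: o oh ox oe oE E => m v /= _ _ _ ->.
      have oD : o = mk Deq o.2 by case: o oh ox oe oE E Du => m v /= _ _ _ ->.
      split.
      * move=> eE; apply: (NDE o.2); rewrite -oD; exact: Htr oe eE.
      * by apply/orP; right; apply/andP; split; [|exact: Du].
      * move=> q qE; rewrite oD in oe; case: (Hint _ _ _ _ qE oe) => H.
          by rewrite /W (G2 _ H).
        by case: (NDE _ H).
  - move=> o o' ox hoo' _ [o'h o'x G'].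
    have [n'e Wo' Hq'] := G' o' o'h erefl.
    have [oh _] := Hdom _ _ hoo'.
    split=> // o'' o''h E.
    case: (cls _ _ oh o''h (esym E)) => [->|[[oE ->]|[oE ->]]].
    + split; first by move=> eo; apply: n'e; apply: Htr eo hoo'.
        exact: Hq'.
      by move=> q qo; apply: Hq'; apply: Htr qo hoo'.
    + apply: Wd; move: (Hq' _ hoo'); rewrite /W oE /=; case/orP => // H.
      by apply: Hm; case: o oh ox hoo' oE E H => m v /= _ _ _ -> .
    + have oD : o = mk Deq o.2 by case: o oh ox hoo' oE E => m v /= _ _ _ ->.
      have Du : mk Deq o.2 \in u0.
        by move: (Hq' _ hoo'); rewrite /W oE /= orbF -oD.
      rewrite oD in hoo'.
      split.
      * move=> eE; case: (Hint _ _ _ _ eE hoo') => H; [by apply: n'e|by case: (NDE _ H)].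
      * by apply/orP; right; apply/andP; split; [|exact: Du].
      * move=> q qE; case: (Hint _ _ _ _ qE hoo') => H; [exact: Hq'|by case: (NDE _ H)].
  - move=> o o' oh E _ [o'h o'x G']; split; first done.
      by rewrite E.
    by move=> o'' o''h E'; apply: G' => //; rewrite E' E.
have P4 : forall o, InC h x o -> ~ hb h e o.
  by move=> o /CG [oh _ G]; case: (G o oh erefl).
have P5 : forall v, InC h x (mk Enq v) -> mk Deq v \in ops h.
  move=> v /CG [oh _ G]; case: (G _ oh erefl) => _ /orP [H|/andP[_ H]] _.
    by rewrite Mu mem_cat (Hm _ H).
  by rewrite Mu mem_cat H.
have Cin : forall o, InC h x o -> o \in w'.
  by move=> o /CG [oh ox _]; rewrite memw' oh; apply/eqP.
set inP := fun o => pb (InC h x o).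
have inPE : forall o o', o \in ops h -> o' \in ops h -> o.2 = o'.2 -> inP o = inP o'.
  move=> o o' oh o'h E; apply/pbP/pbP => H.
    by apply: (C2 o'h (esym E) H).
  by apply: (C2 oh E H).
set w := seg2 w' inP e.
have Uw : uniq w by apply: seg2_uniq.
have Mw : forall o, (o \in w) = (o == e) || (o \in w') by move=> o; apply: seg2_mem.
have notx : forall o, o \in w -> o.2 <> x -> o \in w'.
  by move=> o; rewrite Mw => /orP[/eqP->|//].
have wh : forall o, o \in w' -> o \in ops h /\ o.2 <> x.
  by move=> o; rewrite memw' => /andP [-> /eqP].
exists w.
- apply: valid_gen => //; split=> //.
  + move=> d o Dw ow od.
    have oh : o \in ops h by move: ow; rewrite Mw => /orP[/eqP->//|/wh[]].
    case: (eqVneq d x) => [dx'|dx'].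
      by rewrite (Vals _ oh); [rewrite /e dx'|rewrite od].
    have Dw' : mk DeqEmpty d \in w' by apply: notx => //; apply/eqP.
    have ow' : o \in w' by apply: notx => //; rewrite od; apply/eqP.
    exact: V1 d o Dw' ow' od.
  + move=> d Dw.
    have dx' : d <> x by move=> E; move: Dw; rewrite Mw => /orP[/eqP|/wh[_]].
    have Dw' : mk Deq d \in w' by apply: notx.
    have B1 := V2 d Dw'.
    have [Ew' _] := before_mem B1.
    apply/seg2_bef => //; right; split=> //; apply: inPE; [exact: (wh _ Ew').1|exact: (wh _ Dw').1|done].

  + move=> a b Hab Db.
    have [Ea Eb] := before_mem Hab.
    have Eaw : mk Enq a \in w' by move: Ea; rewrite Mw => /orP[/eqP|].
    have Ebw : mk Enq b \in w' by move: Eb; rewrite Mw => /orP[/eqP|].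
    have Dbw : mk Deq b \in w' by move: Db; rewrite Mw => /orP[/eqP|].
    have [Eah ax] := wh _ Eaw; have [Ebh bx] := wh _ Ebw; have [Dbh _] := wh _ Dbw.
    move/(seg2_bef _ Uw' ew' Eaw Ebw): Hab => [[pa pb']|[pab B1]].
    * have InA : InC h x (mk Enq a) by apply/pbP.
      have Dah := P5 _ InA.
      have Daw : mk Deq a \in w' by rewrite memw' Dah; apply/eqP.
      apply/seg2_bef => //; left; split.
        by rewrite (inPE _ (mk Enq a)).
      by rewrite (inPE _ (mk Enq b)).
    * have B2 := V3 a b B1 Dbw.
      have [Daw _] := before_mem B2.
      have [Dah _] := wh _ Daw.
      apply/seg2_bef => //; right; split=> //.
      by rewrite (inPE _ (mk Enq a)) // pab (inPE _ (mk Deq b)).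
  + move=> a d Had.
    have [Ea Dd] := before_mem Had.
    have Eaw : mk Enq a \in w' by move: Ea; rewrite Mw => /orP[/eqP|].
    have [Eah ax] := wh _ Eaw.
    case: (eqVneq d x) => [dx'|dx'].
      rewrite dx' in Had *.
      move/(seg2_befc _ Uw' ew' Eaw): Had => pa.
      have InA : InC h x (mk Enq a) by apply/pbP.
      have Dah := P5 _ InA.
      have Daw : mk Deq a \in w' by rewrite memw' Dah; apply/eqP.
      by apply/seg2_befc => //; rewrite (inPE _ (mk Enq a)).
    have Ddw : mk DeqEmpty d \in w' by apply: notx => //; apply/eqP.
    have [Ddh _] := wh _ Ddw.
    move/(seg2_bef _ Uw' ew' Eaw Ddw): Had => [[pa pb']|[pab B1]].
    * have InA : InC h x (mk Enq a) by apply/pbP.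
      have Dah := P5 _ InA.
      have Daw : mk Deq a \in w' by rewrite memw' Dah; apply/eqP.
      by apply/seg2_bef => //; left; split=> //; rewrite (inPE _ (mk Enq a)).
    * have B2 := V4 a d B1.
      have [Daw _] := before_mem B2.
      have [Dah _] := wh _ Daw.
      apply/seg2_bef => //; right; split=> //.
      by rewrite (inPE _ (mk Enq a)).
- split=> //.
  + move=> o; apply/idP/idP => H.
      case: (eqVneq o.2 x) => ox.
        by rewrite (Vals o H ox) Mw eqxx.
      by rewrite Mw memw' H ox orbT.
    by move: H; rewrite Mw => /orP[/eqP->//|/wh[]].
  + move=> a b hab; have [ah bh] := Hdom _ _ hab.
    case: (eqVneq b.2 x) => bx.
      have Eb := Vals b bh bx; rewrite Eb in hab *.
      case: (eqVneq a.2 x) => ax.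
        by rewrite (Vals a ah ax) in hab; case: (Hirr _ hab).
      have aw : a \in w' by rewrite memw' ah ax.
      by apply/seg2_befc => //; apply/pbP; apply: C0 => //; apply/eqP.
    have bw : b \in w' by rewrite memw' bh bx.
    case: (eqVneq a.2 x) => ax.
      have Ea := Vals a ah ax; rewrite Ea in hab *.
      by apply/seg2_cbef => //; apply/negP => /pbP /P4.
    have aw : a \in w' by rewrite memw' ah ax.
    have Bab : before w' a b by apply: hbw' => //; apply/eqP.
    apply/seg2_bef => //.
    case ib: (inP b).
      right; split=> //; apply/pbP; apply: (C1 _ hab); [exact/eqP|exact/pbP].
    by case ia: (inP a); [left|right].
Qed.

Lemma only_valid w : only_enq w -> uniq w -> validQ w.
Proof.
move=> Ho Uw.
have nE : forall o, o \in w -> o.1 = Enq by move=> o /(onlyE Ho).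
split=> //.
- by move=> d o /nE.
- by move=> d /nE.
- by move=> a b _ /nE.
- by move=> a d [_ /nE].
Qed.

Theorem mainTheorem1 (h : history) (x : nat) :
  is_history h -> differentiated h ->
  [/\ (forall u, M_R0 x u -> lin h u ->
         lin_set (hist_remove h x) L_R0 -> lin_set h L_R0),
      (forall u, M_REnq x u -> lin h u ->
         lin_set (hist_remove h x) L_R0_Enq -> lin_set h L_R0_Enq),
      (forall u, M_REnqDeq x u -> lin h u ->
         lin_set (hist_remove h x) L_R0_Enq_EnqDeq -> lin_set h L_R0_Enq_EnqDeq)
    & (forall u, M_RDeqEmpty x u -> lin h u ->
         lin_set (hist_remove h x) Queue -> lin_set h Queue)].
Proof.
move=> Hh Hd; have [Uh Hdom _ _ _] := Hh.
have domR : forall a b, hb (hist_remove h x) a b ->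
    a \in ops (hist_remove h x) /\ b \in ops (hist_remove h x).
  move=> a b [H [ax bx]]; have [ah bh] := Hdom _ _ H.
  by rewrite /= !mem_filter ah bh; split; apply/andP; split=> //; apply/eqP.
split.
- move=> u Eu Hl _; exists u => //; rewrite Eu; exact: gen_R0.
- move=> u [u' [Eu Hu' Hx']] Hl _; exists u => //.
  have [Uu _ _] := lin_L Hdom Hl.
  have Ho : only_enq u by rewrite Eu /= Hu'.
  apply: (valid_gen (only_valid Ho Uu)) => /=; apply/allP => o /(onlyE Ho) ->; done.

- move=> u [u1 [v [Eu Hu1 Hx1 Hxv]]] Hl [w' Gw' Hl'].
  have Lu := lin_L Hdom Hl; rewrite Eu in Lu.
  have [w Gw Lw] := part3 Hh Lu Hu1 Hx1 Hxv (lin_L domR Hl') (gen_valid Gw') (gen_noDE Gw').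
  by exists w => //; apply: L_lin.
- move=> u [u0 [v [Eu Hm Hx0 Hxv]]] Hl [w' Gw' Hl'].
  have Lu := lin_L Hdom Hl; rewrite Eu in Lu.
  have [w Gw Lw] := part4 Hh Hd Lu Hm Hx0 Hxv (lin_L domR Hl') (gen_valid Gw').
  by exists w => //; apply: L_lin.
Qed.
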